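(* Let $(\Omega,\mathcal F,\mathcal P)$ be pre-Hahn-localizable with $\mathcal P$ convex, and let $\mathcal Q$ and $\mathcal Q'$ be two localizations with corresponding pairwise disjoint support sets $\{S_Q:Q\in\mathcal Q\}$ and $\{T_{Q'}:Q'\in\mathcal Q'\}$. Then $(\mathcal H_{\mathcal F}^{\mathcal Q})^{\mathcal P}=(\mathcal H_{\mathcal F}^{\mathcal Q'})^{\mathcal P}$, where the measures of $\mathcal P$ are extended to the Hahn-extensions in the canonical way.
   Context: $\mathcal P$ is a family of probability measures on $\mathcal F$. $\mathcal P\lll\mathcal Q$ means each $P\in\mathcal P$ is absolutely continuous w.r.t. some $Q\in\mathcal Q$; $\mathrm{sconv}(\mathcal Q)$ denotes countable convex combinations. A localization of $\mathcal P$ is a family $\mathcal Q$ of probability measures on $\mathcal F$ together with support sets $S_Q\in\mathcal F$ such that $Q(S_R)=\delta_{QR}$ for $Q,R\in\mathcal Q$ and $\mathcal Q\lll\mathcal P\lll\mathrm{sconv}(\mathcal Q)$; $\mathcal P$ is pre-Hahn-localizable if a localization exists. The Hahn-extension is $\mathcal H_{\mathcal F}^{\mathcal Q}=\sigma\big(\mathcal F\cup\{\bigcup_{Q\in\mathcal Q}E_Q:E_Q\in\mathcal F,E_Q\subseteq S_Q\}\big)$; each $P\in\mathcal P$ extends to $\mathcal H_{\mathcal F}^{\mathcal Q}$ by $P^{\mathcal Q}(A)=\sum_{Q\in\mathcal Q(P)}P(A\cap S_Q)$, where $\mathcal Q(P)=\{Q\in\mathcal Q:P(S_Q)>0\}$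 is countable. For a σ-algebra $\mathcal G$ carrying the measures of $\mathcal P$, $\mathcal G^{\mathcal P}=\bigcap_{P\in\mathcal P}\{G\cup Z:G\in\mathcal G, Z\subseteq N\in\mathcal G, P(N)=0\}$. *)

(* Defs.v *)
(* Measures are represented as
   functions [set Omega -> \bar R]; only their values on the relevant
   sigma-algebra matter. *)
From mathcomp Require Import all_boot all_order all_algebra.
From mathcomp Require Import all_classical all_reals.
From mathcomp Require Import ereal sequences esum measurable_structure.
Set Implicit Arguments. Unset Strict Implicit. Unset Printing Implicit Defensive.
Import Order.TTheory GRing.Theory Num.Theory.
Local Open Scope classical_set_scope.
Local Open Scope ring_scope.
Local Open Scope ereal_scope.

Definition meas (Omega : Type) (R : realType) := set Omega -> \bar R.

Section Defs.
Context {Omega : Type} {R : realType}.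
Implicit Types (F G : set (set Omega)) (P Q M : meas Omega R)
  (PP QQ : set (meas Omega R)).

Definition is_prob F P :=
  [/\ P set0 = 0, (forall A, F A -> 0 <= P A), P setT = 1 &
     (forall A : (set Omega)^nat, (forall n, F (A n)) -> trivIset setT A ->
        (fun n => \sum_(0 <= i < n) P (A i)) @ \oo --> P (\bigcup_n A n))].

Definition abscont F P Q := forall A, F A -> Q A = 0 -> P A = 0.

Definition fam_abscont F PP QQ :=
  forall P, PP P -> exists Q, QQ Q /\ abscont F P Q.

Definition sconv F QQ : set (meas Omega R) := fun M =>
  exists (q : nat -> meas Omega R) (w : nat -> R),
    [/\ (forall n, QQ (q n)), (forall n, (0 <= w n)%R),
        \sum_(n <oo) (w n)%:E = 1 &
        forall A, F A -> M A = \sum_(n <oo) ((w n)%:E * q n A)].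

Definition fam_convex F PP :=
  forall P1 P2 (t : R), PP P1 -> PP P2 -> (0 <= t <= 1)%R ->
    exists P, PP P /\
      forall A, F A -> P A = (t%:E * P1 A + (1 - t)%:E * P2 A).

Definition localization F PP QQ (S : meas Omega R -> set Omega) :=
  [/\ (forall Q, QQ Q -> is_prob F Q),
      (forall Q, QQ Q -> F (S Q)),
      (forall Q Q', QQ Q -> QQ Q' -> Q (S Q') = (if `[< Q = Q' >] then 1 else 0)),
      fam_abscont F QQ PP &
      fam_abscont F PP (sconv F QQ)].

Definition pre_Hahn_localizable F PP :=
  exists QQ S, localization F PP QQ S.

Definition Hahn_ext F QQ (S : meas Omega R -> set Omega) : set (set Omega) :=
  smallest (sigma_algebra setT)
    (F `|` [set A | exists E : meas Omega R -> set Omega,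
              (forall Q, QQ Q -> F (E Q) /\ E Q `<=` S Q) /\
              A = \bigcup_(Q in QQ) E Q]).

Definition ext_meas QQ (S : meas Omega R -> set Omega) P : meas Omega R :=
  fun A => \esum_(Q in [set Q | QQ Q /\ 0 < P (S Q)]) P (A `&` S Q).

Definition fam_completion G (ext : meas Omega R -> meas Omega R) PP
  : set (set Omega) :=
  [set A | forall P, PP P -> exists (G0 Z N : set Omega),
     [/\ G G0, G N, Z `<=` N, ext P N = 0 & A = G0 `|` Z]].

End Defs.

(* Main.v *)
Require Import Defs.
From mathcomp Require Import all_boot all_order all_algebra.
From mathcomp Require Import all_classical all_reals.
From mathcomp Require Import ereal sequences esum measurable_structure.
From mathcomp Require Import topology normedtype.
From mathcomp Require Import lra.
Set Implicit Arguments. Unset Strict Implicit. Unset Printing Implicit Defensive.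
Import Order.TTheory GRing.Theory Num.Theory.
Local Open Scope classical_set_scope.
Local Open Scope ereal_scope.

Section SA.
Context {Omega : Type} (F : set (set Omega)) (HF : sigma_algebra setT F).
Lemma sF0 : F set0. Proof. by case: HF. Qed.
Lemma sFC A : F A -> F (~` A). Proof. by case: HF => _ h _ /h; rewrite setTD. Qed.
Lemma sFT : F setT. Proof. by rewrite -setC0; apply: sFC; exact: sF0. Qed.
Lemma sFB (A : (set Omega)^nat) : (forall n, F (A n)) -> F (\bigcup_n A n).
Proof. by case: HF => _ _; apply. Qed.
Lemma sFU A B : F A -> F B -> F (A `|` B).
Proof. move=> hA hB; rewrite -bigcup2E; apply: sFB => -[|[|n]] //=; exact: sF0. Qed.
Lemma sFI A B : F A -> F B -> F (A `&` B).
Proof. move=> hA hB; rewrite -(setCK (A `&` B)) setCI; apply/sFC/sFU; exact: sFC. Qed.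
Lemma sFD A B : F A -> F B -> F (A `\` B).
Proof. by move=> hA hB; rewrite setDE; apply: sFI => //; exact: sFC. Qed.
End SA.

Section Prob.
Context {Omega : Type} {R : realType} (F : set (set Omega)) (HF : sigma_algebra setT F)
  (P : meas Omega R) (HP : is_prob F P).

Lemma pnull_union (A : (set Omega)^nat) : (forall n, F (A n)) -> trivIset setT A ->
  (forall n, P (A n) = 0) -> P (\bigcup_n A n) = 0.
Proof.
move=> FA tA P0; case: HP => _ _ _ /(_ A FA tA) h.
suff c : (fun n => \sum_(0 <= i < n) P (A i)) @ \oo --> 0.
  exact: (cvg_unique (@ereal_hausdorff R) h c).
apply: cvg_near_cst; near=> n.
by rewrite big1 // => i _; rewrite P0.
Unshelve. all: by end_near.
Qed.

Lemma padd A B : F A -> F B -> A `&` B = set0 -> P (A `|` B) = P A + P B.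
Proof.
move=> FA FB AB; case: HP => P0 _ _ /(_ (bigcup2 A B)) h.
rewrite -bigcup2E; apply/esym.
suff c : (fun n => \sum_(0 <= i < n) P (bigcup2 A B i)) @ \oo --> P A + P B.
  apply: (cvg_unique (@ereal_hausdorff R) c (h _ _)).
  + by move=> -[|[|n]] //=; exact: sF0 HF.
  + by rewrite -trivIset_bigcup2.
apply: cvg_near_cst; near=> n.
  have n2 : (2 <= n)%N by near: n; exists 2%N.
  rewrite (big_cat_nat _ n2) //= [X in (_ + X)%E]big1_seq.
    by rewrite big_nat_recr //= big_nat_recr //= big_geq // add0e adde0.
  by move=> i /andP[_]; rewrite mem_index_iota => /andP[i2 _]; case: i i2 => [|[|i]].
Unshelve. all: by end_near.
Qed.

Lemma pmono A B : F A -> F B -> A `<=` B -> P A <= P B.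
Proof.
move=> FA FB AB; have FBA : F (B `\` A) := sFD HF FB FA.
rewrite -(setDUK AB) padd //.
  by rewrite leeDl //; case: HP => _ + _ _; apply.
by rewrite setDE setICA setICr setI0.
Qed.
End Prob.

Section Main.
Context {Omega : Type} {R : realType} (F : set (set Omega)) (HF : sigma_algebra setT F).

Lemma HahnS (QQ : set (meas Omega R)) (S : meas Omega R -> set Omega) :
  (forall Q, QQ Q -> F (S Q)) ->
  (forall Q Q', QQ Q -> QQ Q' -> Q <> Q' -> S Q `&` S Q' = set0) ->
  forall A, Hahn_ext F QQ S A -> forall Q, QQ Q -> F (A `&` S Q).
Proof.
move=> FS dS A hA; apply: (hA [set B | forall Q, QQ Q -> F (B `&` S Q)]).
split; first split.
  + by move=> Q _ /=; rewrite set0I; exact: sF0 HF.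
  + move=> B hB Q QQQ; rewrite setTD.
    have -> : ~` B `&` S Q = S Q `\` (B `&` S Q).
      by apply/seteqP; split => x /=; [move=> [nB SQ]; split => // -[]|move=> [SQ nBS]; split => // Bx; apply: nBS].
    exact: (sFD HF (FS _ QQQ) (hB _ QQQ)).
  + move=> B hB Q QQQ; rewrite setI_bigcupl; apply: (sFB HF) => n; exact: hB.
+ move=> B [FB|[E [hE ->]]] Q QQQ; first exact: (sFI HF FB (FS _ QQQ)).
  have -> : \bigcup_(Q0 in QQ) E Q0 `&` S Q = E Q.
    apply/seteqP; split => x /=.
      move=> [[Q0 QQ0 EQ0x] SQx]; have [e|ne] := pselect (Q0 = Q); first by rewrite -e.
      have : (S Q0 `&` S Q) x by split => //; exact: (hE Q0 QQ0).2.
      by rewrite dS.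
    by move=> EQx; split; [exists Q|exact: (hE Q QQQ).2].
  exact: (hE Q QQQ).1.
Qed.

End Main.

Section Dir.
Context {Omega : Type} {R : realType} (F : set (set Omega)) (HF : sigma_algebra setT F).

Lemma prob_compl (q : meas Omega R) A : is_prob F q -> F A -> q A = 1 -> q (~` A) = 0.
Proof.
move=> hq FA qA; have FC : F (~` A) by have := sFC HF FA.
have := padd HF hq FA FC (setICr A); rewrite setUCr qA.
case: hq => _ q0 -> _; have := q0 _ FC.
case: (q (~` A)) => [r| |] //= r0.
  by move/eqP; rewrite -EFinD eqe => /eqP h; congr (_%:E); lra.
Qed.

Lemma dir (PP QQ QQ' : set (meas Omega R)) (S T : meas Omega R -> set Omega) :
  (forall P, PP P -> is_prob F P) ->
  localization F PP QQ S ->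
  (forall Q Q', QQ Q -> QQ Q' -> Q <> Q' -> S Q `&` S Q' = set0) ->
  (forall Q', QQ' Q' -> F (T Q')) ->
  fam_completion (Hahn_ext F QQ S) (ext_meas QQ S) PP `<=`
  fam_completion (Hahn_ext F QQ' T) (ext_meas QQ' T) PP.
Proof.
move=> hPP [QQprob FS Sdelta _ PPsc] dS FT A hA P PPP.
have hP := hPP P PPP.
have [G0 [Z [N [HG0 HN ZN e0 ->]]]] := hA P PPP.
have [M [[q [w [qQQ w0 wsum Meq]]] PM]] := PPsc P PPP.
have HS := HahnS HF FS dS.
pose D := \bigcup_n S (q n).
have FD : F D by apply: (sFB HF) => n; exact: FS.
have FCD : F (~` D) := sFC HF FD.
have PCD : P (~` D) = 0.
  apply: PM => //; rewrite Meq //; apply: eseries0 => n _ _.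
  suff -> : q n (~` D) = 0 by rewrite mule0.
  have hq := QQprob _ (qQQ n).
  have FSn := FS _ (qQQ n).
  apply/le_anti/andP; split; last by case: hq => _ + _ _; apply.
  rewrite -(prob_compl hq FSn); last first.
    by rewrite Sdelta ?qQQ //; case: asboolP.
  apply: (pmono HF hq FCD (sFC HF FSn)).
  by apply: subsetC => x Sx; exists n.
have FNS n : F (N `&` S (q n)) by exact: (HS _ HN _ (qQQ n)).
have PNS n : P (N `&` S (q n)) <= 0.
  have [pos|npos] := boolP (0 < P (S (q n))).
    rewrite -e0 /ext_meas; apply: esum_ge; exists [set q n].
      by split; [exact: finite_set1|move=> _ ->; split => //; exact: qQQ].
    rewrite fsbig_set1 //.
  rewrite -leNgt in npos; apply: le_trans npos.
  by apply: (pmono HF hP (FNS n) (FS _ (qQQ n))); exact: subIsetr.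
pose Dn n := \bigcup_m (if (m < n)%N then S (q m) else set0).
have FDn n : F (Dn n).
  by apply: (sFB HF) => m; case: ifP => _; [exact: FS|exact: sF0 HF].
pose Bn n := N `&` S (q n) `\` Dn n.
have FBn n : F (Bn n) := sFD HF (FNS n) (FDn n).
have ND : N `&` D = \bigcup_n Bn n.
  apply/seteqP; split => x /=; last first.
    by move=> [n _ [[Nx Sx] _]]; split => //; exists n.
  move=> [Nx [n _ Sx]]; elim/ltn_ind: n Sx => n IH Sx.
  have [[m _]|nD] := pselect (Dn n x).
    by case: ltnP => // mn Smx; exact: IH mn Smx.
  by exists n.
have PND : P (N `&` D) = 0.
  rewrite ND; apply: (pnull_union hP FBn).
    apply/trivIsetP => i j _ _ ij.
    wlog lt : i j ij / (i < j)%N.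
      move=> W; have [l|l|e] := ltngtP i j; [exact: W|by rewrite setIC W // eq_sym|by rewrite e eqxx in ij].
    apply/seteqP; split => x //= [[[_ Six] _] [_ nDj]].
    by apply: nDj; exists i => //; rewrite lt.
  move=> n; apply/le_anti/andP; split.
    apply: le_trans (PNS n); apply: (pmono HF hP (FBn n) (FNS n)); exact: subDsetl.
  by case: hP => _ + _ _; apply.
pose N' := ~` D `|` (N `&` D).
have FND : F (N `&` D) by rewrite ND; exact: (sFB HF).
have FN' : F N' := sFU HF FCD FND.
have PN' : P N' = 0.
  rewrite (padd HF hP FCD FND) ?PCD ?PND ?adde0 //.
  by apply/seteqP; split => x //= [nD [_ Dx]].
have FG0 : F (G0 `&` D).
  rewrite /D setI_bigcupr; apply: (sFB HF) => n; exact: (HS _ HG0 _ (qQQ n)).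
have FH (X : set Omega) : F X -> Hahn_ext F QQ' T X.
  by move=> FX Y [_ GY]; apply: GY; left.
exists (G0 `&` D), ((G0 `|` Z) `\` (G0 `&` D)), N'; split.
- exact: FH.
- exact: FH.
- move=> x [[G0x|Zx] nGD]; have [Dx|nDx] := pselect (D x).
  + by exfalso; apply: nGD.
  + by left.
  + by right; split => //; exact: ZN.
  + by left.
- rewrite /ext_meas; apply: esum1 => Q' [QQ'Q' _].
  apply/le_anti/andP; split; last first.
    by case: hP => _ + _ _; apply; exact: (sFI HF FN' (FT _ QQ'Q')).
  rewrite -PN'; apply: (pmono HF hP _ FN'); last exact: subIsetl.
  exact: (sFI HF FN' (FT _ QQ'Q')).
- by rewrite setDUK // => x [? _]; left.
Qed.

End Dir.

Theorem corollary4p8 (R : realType) (Omega : Type)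
  (F : set (set Omega)) (PP : set (meas Omega R))
  (QQ QQ' : set (meas Omega R)) (S T : meas Omega R -> set Omega) :
  sigma_algebra setT F ->
  (forall P, PP P -> is_prob F P) ->
  pre_Hahn_localizable F PP ->
  fam_convex F PP ->
  localization F PP QQ S ->
  (forall Q Q', QQ Q -> QQ Q' -> Q <> Q' -> S Q `&` S Q' = set0) ->
  localization F PP QQ' T ->
  (forall Q Q', QQ' Q -> QQ' Q' -> Q <> Q' -> T Q `&` T Q' = set0) ->
  fam_completion (Hahn_ext F QQ S) (ext_meas QQ S) PP =
  fam_completion (Hahn_ext F QQ' T) (ext_meas QQ' T) PP.
Proof.
move=> HF hPP _ _ LS dS LT dT.
apply/seteqP; split; apply: (dir HF hPP) => //.
- by case: LT.
- by case: LS.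
Qed.
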